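(* If $(\mathcal{C},P)$ is a heaco, then for every object $A$ the poset $P(A)^{op}$ is a Heyting algebra; in particular every $P(A)$ has finite joins.
   Context: A doctrine is a pair $(\mathcal{C},P)$, $\mathcal{C}$ a category with finite products, $P:\mathcal{C}^{op}\to\mathbf{Pos}$ a functor, $f^*=P(f)$; primary: each $P(A)$ has binary meets preserved by each $f^*$. Elementary: primary and for every $A$ there is $\delta_A\in P(A\times A)$ such that for every $X$ the assignment $\psi\mapsto\langle\pi_1,\pi_2\rangle^*\psi\wedge\langle\pi_2,\pi_3\rangle^*\delta_A$ is a left adjoint $P(X\times A)\to P(X\times A\times A)$ to $(id_X\times\Delta_A)^*$. Graph of $f:X\to A$: $\mathcal{G}(f)=(f\times id_A)^*\delta_A$. Stable initial object: initial $0$ with $X\times0\cong0$ for all $X$. AC: for every $A$ not stable initial and every $\Gamma$, $\pi_\Gamma^*$ ($\pi_\Gamma:\Gamma\times A\to\Gamma$) has a left adjoint $\Sigma_{\pi_\Gamma}$ and each $\psi\in P(\Gamma\times A)$ has a chosen $\epsilon_\psi:\Gamma\to A$ with $\Sigma_{\pi_\Gamma}\psi=\langle id_\Gamma,\epsilon_\psi\rangle^*\psi$ (also with factors swapped). Co-comprehension: each $P(A)$ has a bottom and each $\alpha$ has $\lceil\alpha\rceil:\{\alpha\}^o\to A$ with $\lceil\alpha\rceil^*\alpha=\bot$, universal among $f$ with $f^*\alpha=\bot$; full if $\lceil\beta\rceil$ factoring through $\lceil\alpha\rceil$ implies $\alpha\le\beta$. An eaco is an elementary doctrine with full co-comprehension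 satisfying AC such that for every $f:X\to A$, $\alpha\in P(A)$: $f^*\langle\epsilon_{\mathcal{G}(\lceil\alpha\rceil)},id_A\rangle^*\mathcal{G}(\lceil\alpha\rceil)=\langle\epsilon_{\mathcal{G}(\lceil f^*\alpha\rceil)},id_X\rangle^*\mathcal{G}(\lceil f^*\alpha\rceil)$. Higher order: for every $A$ there are $\mathbb{P}(A)$ and $\in_A\in P(A\times\mathbb{P}(A))$ such that every $\phi\in P(A\times Y)$ equals $(id_A\times\chi_\phi)^*\in_A$ for some $\chi_\phi:Y\to\mathbb{P}(A)$. A heaco is a higher order eaco. *)

(* Defs.v *)
Set Implicit Arguments.
Unset Strict Implicit.

Record FPCat := {
  Ob :> Type;
  Hom : Ob -> Ob -> Type;
  idm : forall A, Hom A A;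
  comp : forall A B C, Hom B C -> Hom A B -> Hom A C;
  comp_id_l : forall A B (f : Hom A B), comp (idm B) f = f;
  comp_id_r : forall A B (f : Hom A B), comp f (idm A) = f;
  comp_assoc : forall A B C D (h : Hom C D) (g : Hom B C) (f : Hom A B),
      comp h (comp g f) = comp (comp h g) f;
  term : Ob;
  to_term : forall A, Hom A term;
  to_term_uniq : forall A (f : Hom A term), f = to_term A;
  prod : Ob -> Ob -> Ob;
  p1 : forall A B, Hom (prod A B) A;
  p2 : forall A B, Hom (prod A B) B;
  pair : forall X A B, Hom X A -> Hom X B -> Hom X (prod A B);
  pair_p1 : forall X A B (f : Hom X A) (g : Hom X B), comp (p1 A B) (pair f g) = f;
  pair_p2 : forall X A B (f : Hom X A) (g : Hom X B), comp (p2 A B) (pair f g) = g;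
  pair_uniq : forall X A B (h : Hom X (prod A B)),
      h = pair (comp (p1 A B) h) (comp (p2 A B) h)
}.

Arguments Hom {_} _ _.
Arguments idm {_} _.
Arguments comp {_ A B C} _ _.
Arguments term {_}.
Arguments to_term {_} _.
Arguments prod {_} _ _.
Arguments p1 {_} _ _.
Arguments p2 {_} _ _.
Arguments pair {_ X A B} _ _.

Definition prodm (C : FPCat) (X Y A B : C) (f : Hom X A) (g : Hom Y B)
  : Hom (prod X Y) (prod A B) :=
  pair (comp f (p1 X Y)) (comp g (p2 X Y)).

Definition is_iso (C : FPCat) (A B : C) : Prop :=
  exists (f : Hom A B) (g : Hom B A), comp g f = idm A /\ comp f g = idm B.

Definition stable_initial (C : FPCat) (Z : C) : Prop :=
  (forall B : C, exists f : Hom Z B, forall g : Hom Z B, g = f) /\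
  (forall X : C, is_iso (prod X Z) Z).

Record Doctrine (C : FPCat) := {
  PA : C -> Type;
  le : forall A, PA A -> PA A -> Prop;
  le_refl : forall A (x : PA A), le x x;
  le_trans : forall A (x y z : PA A), le x y -> le y z -> le x z;
  le_antisym : forall A (x y : PA A), le x y -> le y x -> x = y;
  pb : forall A B, Hom A B -> PA B -> PA A;
  pb_mono : forall A B (f : Hom A B) (x y : PA B), le x y -> le (pb f x) (pb f y);
  pb_id : forall A (x : PA A), pb (idm A) x = x;
  pb_comp : forall A B D (f : Hom A B) (g : Hom B D) (x : PA D),
      pb (comp g f) x = pb f (pb g x)
}.

Arguments PA {C} _ _.
Arguments le {C _ A} _ _.
Arguments pb {C _ A B} _ _.

Record Primary (C : FPCat) (P : Doctrine C) := {
  meet : forall A, PA P A -> PA P A -> PA P A;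
  meet_l : forall A (x y : PA P A), le (meet x y) x;
  meet_r : forall A (x y : PA P A), le (meet x y) y;
  meet_glb : forall A (x y z : PA P A), le z x -> le z y -> le z (meet x y);
  pb_meet : forall A B (f : Hom A B) (x y : PA P B),
      pb f (meet x y) = meet (pb f x) (pb f y)
}.
Arguments meet {C P} _ {A} _ _.

Definition pr12 (C : FPCat) (X A : C) : Hom (prod (prod X A) A) (prod X A) :=
  p1 (prod X A) A.
Definition pr23 (C : FPCat) (X A : C) : Hom (prod (prod X A) A) (prod A A) :=
  pair (comp (p2 X A) (p1 (prod X A) A)) (p2 (prod X A) A).
Definition idxDelta (C : FPCat) (X A : C) : Hom (prod X A) (prod (prod X A) A) :=
  pair (idm (prod X A)) (p2 X A).

Record Elementary (C : FPCat) (P : Doctrine C) := {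
  el_prim : Primary P;
  delta : forall A : C, PA P (prod A A);
  delta_adj : forall (X A : C) (psi : PA P (prod X A)) (phi : PA P (prod (prod X A) A)),
      le (meet el_prim (pb (pr12 X A) psi) (pb (pr23 X A) (delta A))) phi
      <-> le psi (pb (idxDelta X A) phi)
}.

Definition graph (C : FPCat) (P : Doctrine C) (E : Elementary P) (X A : C)
  (f : Hom X A) : PA P (prod X A) :=
  pb (prodm f (idm A)) (delta E A).

Record FullCoComprehension (C : FPCat) (P : Doctrine C) := {
  bot : forall A, PA P A;
  bot_least : forall A (x : PA P A), le (bot A) x;
  co : forall A, PA P A -> C;
  ceil : forall A (alpha : PA P A), Hom (co alpha) A;
  ceil_bot : forall A (alpha : PA P A), pb (ceil alpha) alpha = bot (co alpha);
  ceil_univ : forall A (alpha : PA P A) (Y : C) (f : Hom Y A),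
      pb f alpha = bot Y ->
      exists h : Hom Y (co alpha), comp (ceil alpha) h = f /\
        forall h' : Hom Y (co alpha), comp (ceil alpha) h' = f -> h' = h;
  ceil_full : forall A (alpha beta : PA P A) (h : Hom (co beta) (co alpha)),
      comp (ceil alpha) h = ceil beta -> le alpha beta
}.
Arguments co {C P} _ {A} _.
Arguments ceil {C P} _ {A} _.

Record AC (C : FPCat) (P : Doctrine C) := {
  sigR : forall (G A : C), ~ stable_initial A -> PA P (prod G A) -> PA P G;
  sigR_adj : forall G A (h : ~ stable_initial A) (psi : PA P (prod G A)) (phi : PA P G),
      le (sigR h psi) phi <-> le psi (pb (p1 G A) phi);
  epsR : forall (G A : C), ~ stable_initial A -> PA P (prod G A) -> Hom G A;
  sigR_eps : forall G A (h : ~ stable_initial A) (psi : PA P (prod G A)),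
      sigR h psi = pb (pair (idm G) (epsR h psi)) psi;
  sigL : forall (G A : C), ~ stable_initial A -> PA P (prod A G) -> PA P G;
  sigL_adj : forall G A (h : ~ stable_initial A) (psi : PA P (prod A G)) (phi : PA P G),
      le (sigL h psi) phi <-> le psi (pb (p2 A G) phi);
  epsL : forall (G A : C), ~ stable_initial A -> PA P (prod A G) -> Hom G A;
  sigL_eps : forall G A (h : ~ stable_initial A) (psi : PA P (prod A G)),
      sigL h psi = pb (pair (epsL h psi) (idm G)) psi
}.
Arguments epsL {C P} _ {G A} _ _.

Record Eaco (C : FPCat) (P : Doctrine C) := {
  ea_el : Elementary P;
  ea_co : FullCoComprehension P;
  ea_ac : AC P;
  ea_cond : forall (X A : C) (f : Hom X A) (alpha : PA P A)
      (h1 : ~ stable_initial (co ea_co alpha))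
      (h2 : ~ stable_initial (co ea_co (pb f alpha))),
      pb f (pb (pair (epsL ea_ac h1 (graph ea_el (ceil ea_co alpha))) (idm A))
                 (graph ea_el (ceil ea_co alpha)))
      = pb (pair (epsL ea_ac h2 (graph ea_el (ceil ea_co (pb f alpha)))) (idm X))
                 (graph ea_el (ceil ea_co (pb f alpha)))
}.

Record HigherOrder (C : FPCat) (P : Doctrine C) := {
  pow : C -> C;
  memb : forall A : C, PA P (prod A (pow A));
  pow_weak_univ : forall (A Y : C) (phi : PA P (prod A Y)),
      exists chi : Hom Y (pow A), phi = pb (prodm (idm A) chi) (memb A)
}.

Record Heaco (C : FPCat) (P : Doctrine C) := {
  he_eaco : Eaco P;
  he_ho : HigherOrder P
}.

Definition is_heyting_algebra (T : Type) (R : T -> T -> Prop) : Prop :=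
  exists (top bt : T) (mt jn imp : T -> T -> T),
    (forall x, R x top) /\ (forall x, R bt x) /\
    (forall x y z, R z (mt x y) <-> (R z x /\ R z y)) /\
    (forall x y z, R (jn x y) z <-> (R x z /\ R y z)) /\
    (forall x y z, R (mt z x) y <-> R z (imp x y)).

Definition has_finite_joins (T : Type) (R : T -> T -> Prop) : Prop :=
  (exists bt : T, forall x, R bt x) /\
  (forall x y : T, exists j : T, forall z, R j z <-> (R x z /\ R y z)).

(* Main.v *)
Require Import Defs.
From Stdlib Require Import ClassicalEpsilon.
Set Implicit Arguments.
Unset Strict Implicit.

Lemma pair_comp (C : FPCat) (X Y A B : C) (f : Hom Y A) (g : Hom Y B) (h : Hom X Y) :
  comp (pair f g) h = pair (comp f h) (comp g h).
Proof.
  rewrite (pair_uniq (comp (pair f g) h)).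
  rewrite !comp_assoc, pair_p1, pair_p2. reflexivity.
Qed.

Lemma pair_id (C : FPCat) (A B : C) : pair (p1 A B) (p2 A B) = idm (prod A B).
Proof.
  rewrite (pair_uniq (idm (prod A B))). rewrite !comp_id_r. reflexivity.
Qed.

Lemma le_eq_l (C : FPCat) (P : Doctrine C) (A : C) (x y z : PA P A) : x = y -> le y z -> le x z.
Proof. intros ->; auto. Qed.

Lemma le_eq_r (C : FPCat) (P : Doctrine C) (A : C) (x y z : PA P A) : y = z -> le x y -> le x z.
Proof. intros ->; auto. Qed.


Lemma comp_pr23_idx (C : FPCat) (X A : C) :
  comp (pr23 X A) (idxDelta X A) = pair (p2 X A) (p2 X A).
Proof.
  unfold pr23, idxDelta. rewrite pair_comp.
  rewrite <- comp_assoc, !pair_p1, !pair_p2, comp_id_r. reflexivity.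
Qed.

(* Unit: reflexivity of delta *)
Lemma delta_refl (C : FPCat) (P : Doctrine C) (E : Elementary P) (Z A : C)
  (phi : PA P Z) (a : Hom Z A) : le phi (pb (pair a a) (delta E A)).
Proof.
  set (psi := pb (p1 Z A) phi).
  set (Phi := meet (el_prim E) (pb (pr12 Z A) psi) (pb (pr23 Z A) (delta E A))).
  assert (H1 : le psi (pb (idxDelta Z A) Phi)) by (apply (delta_adj E); apply le_refl).
  unfold Phi in H1. rewrite pb_meet in H1.
  assert (H2 : le psi (pb (pair (p2 Z A) (p2 Z A)) (delta E A))).
  { eapply le_trans; [exact H1|]. eapply le_trans; [apply meet_r|].
    rewrite <- pb_comp, comp_pr23_idx. apply le_refl. }
  apply (pb_mono (pair (idm Z) a)) in H2.
  unfold psi in H2. rewrite <- !pb_comp in H2.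
  rewrite pair_p1, pb_id, pair_comp, pair_p2 in H2. exact H2.
Qed.

Lemma leibniz (C : FPCat) (P : Doctrine C) (E : Elementary P) (Z X A : C)
  (phi : PA P (prod X A)) (x : Hom Z X) (a1 a2 : Hom Z A) :
  le (meet (el_prim E) (pb (pair x a1) phi) (pb (pair a1 a2) (delta E A)))
     (pb (pair x a2) phi).
Proof.
  set (Phi := pb (pair (comp (p1 X A) (p1 (prod X A) A)) (p2 (prod X A) A)) phi).
  assert (H1 : le (meet (el_prim E) (pb (pr12 X A) phi) (pb (pr23 X A) (delta E A))) Phi).
  { apply (delta_adj E). unfold Phi. rewrite <- pb_comp.
    unfold idxDelta. rewrite pair_comp, <- comp_assoc, !pair_p1, pair_p2, comp_id_r, pair_id, pb_id.
    apply le_refl. }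
  apply (pb_mono (pair (pair x a1) a2)) in H1.
  rewrite pb_meet in H1. unfold Phi, pr12, pr23 in H1. rewrite <- !pb_comp in H1.
  rewrite !pair_comp, <- !comp_assoc, !pair_p1, !pair_p2 in H1. exact H1.
Qed.

Lemma leibniz1 (C : FPCat) (P : Doctrine C) (E : Elementary P) (Z A : C)
  (phi : PA P A) (a1 a2 : Hom Z A) :
  le (meet (el_prim E) (pb a1 phi) (pb (pair a1 a2) (delta E A))) (pb a2 phi).
Proof.
  pose proof (leibniz E (pb (p2 term A) phi) (to_term Z) a1 a2) as H.
  rewrite <- !pb_comp, !pair_p2 in H. exact H.
Qed.

Lemma delta_sym (C : FPCat) (P : Doctrine C) (E : Elementary P) (Z A : C)
  (a1 a2 : Hom Z A) :
  le (pb (pair a1 a2) (delta E A)) (pb (pair a2 a1) (delta E A)).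
Proof.
  pose proof (leibniz E (pb (pair (p2 A A) (p1 A A)) (delta E A)) a1 a1 a2) as H.
  rewrite <- !pb_comp, !pair_comp, !pair_p1, !pair_p2 in H.
  eapply le_trans; [|exact H]. apply meet_glb; [apply delta_refl|apply le_refl].
Qed.

Lemma delta_ext (C : FPCat) (P : Doctrine C) (E : Elementary P) (A : C) (e : Hom A A) :
  (forall psi : PA P A, le psi (pb (pair e (idm A)) (delta E A))) ->
  forall phi : PA P A, le phi (pb e phi) /\ le (pb e phi) phi.
Proof.
  intros He phi; split.
  - pose proof (leibniz1 E phi (idm A) e) as H. rewrite pb_id in H.
    eapply le_trans; [|exact H]. apply meet_glb; [apply le_refl|].
    eapply le_trans; [apply He|]. apply delta_sym.
  - pose proof (leibniz1 E phi e (idm A)) as H. rewrite pb_id in H.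
    eapply le_trans; [|exact H]. apply meet_glb; [apply le_refl|apply He].
Qed.

Lemma ceil_le (C : FPCat) (P : Doctrine C) (Co : FullCoComprehension P) (A : C)
  (x y : PA P A) : le (pb (ceil Co y) x) (bot Co _) -> le x y.
Proof.
  intro H.
  assert (Hb : pb (ceil Co y) x = bot Co _) by (apply le_antisym; [exact H|apply bot_least]).
  destruct (@ceil_univ _ _ Co _ x _ (ceil Co y) Hb) as [h [Hh _]].
  exact (@ceil_full _ _ Co _ x y h Hh).
Qed.

Lemma ceil_ge (C : FPCat) (P : Doctrine C) (Co : FullCoComprehension P) (A : C)
  (x y : PA P A) : le x y -> le (pb (ceil Co y) x) (bot Co _).
Proof.
  intro H. rewrite <- (ceil_bot Co y). apply pb_mono, H.
Qed.

Definition initial (C : FPCat) (W : C) := forall B : C, exists f : Hom W B, forall g : Hom W B, g = f.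

Lemma init_le (C : FPCat) (P : Doctrine C) (Co : FullCoComprehension P) (A : C)
  (b : PA P A) : initial (co Co b) -> forall x, le x b.
Proof.
  intros Hi x. destruct (Hi (co Co x)) as [h _].
  apply (@ceil_full _ _ Co _ x b h).
  destruct (Hi A) as [f Hf]. rewrite (Hf (comp (ceil Co x) h)), (Hf (ceil Co b)). reflexivity.
Qed.

Lemma map_stable_initial (C : FPCat) (W Z : C) (h : Hom W Z) :
  stable_initial Z -> initial W.
Proof.
  intros [Hi Hs] B. destruct (Hs W) as [f [g [Hgf Hfg]]].
  destruct (Hi B) as [k Hk].
  exists (comp (comp k f) (pair (idm W) h)).
  intro g1.
  assert (E1 : g1 = comp (comp g1 (p1 W Z)) (pair (idm W) h))
    by (rewrite <- comp_assoc, pair_p1, comp_id_r; reflexivity).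
  rewrite E1. f_equal.
  rewrite <- (comp_id_r (comp g1 (p1 W Z))), <- Hgf, comp_assoc.
  rewrite (Hk (comp (comp g1 (p1 W Z)) g)). reflexivity.
Qed.

Lemma triv (C : FPCat) (P : Doctrine C) (Co : FullCoComprehension P) (W Z : C)
  (h : Hom W Z) : stable_initial Z -> forall psi1 psi2 : PA P W, le psi1 psi2.
Proof.
  intros Hs psi1 psi2. apply init_le with Co.
  apply (map_stable_initial (comp h (ceil Co psi2)) Hs).
Qed.

Lemma N1fwd (C : FPCat) (P : Doctrine C) (E : Elementary P) (Ac : AC P) (O A : C)
  (c : Hom O A) (h : ~ stable_initial O) (phi : PA P A) :
  le (sigL Ac h (graph E c)) phi -> forall chi : PA P O, le chi (pb c phi).
Proof.
  intros H chi. apply (sigL_adj Ac) in H.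
  apply (pb_mono (pair (idm O) c)) in H.
  rewrite <- !pb_comp, pair_p2 in H. unfold graph in H. rewrite <- pb_comp in H.
  unfold prodm in H. rewrite pair_comp, <- !comp_assoc, pair_p1, pair_p2, comp_id_r, comp_id_l in H.
  eapply le_trans; [|exact H]. apply delta_refl.
Qed.

Lemma N1bwd (C : FPCat) (P : Doctrine C) (E : Elementary P) (Ac : AC P) (O A : C)
  (c : Hom O A) (h : ~ stable_initial O) (phi : PA P A) :
  (forall chi : PA P O, le chi (pb c phi)) -> le (sigL Ac h (graph E c)) phi.
Proof.
  intros H. apply (sigL_adj Ac).
  pose proof (leibniz1 E phi (comp c (p1 O A)) (p2 O A)) as HL.
  unfold graph, prodm. rewrite comp_id_l.
  eapply le_trans; [|exact HL]. apply meet_glb; [|apply le_refl].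
  rewrite pb_comp. eapply le_trans; [|apply pb_mono; apply (H (pb (pair (idm O) (idm O)) (delta E O)))].
  rewrite <- pb_comp, pair_comp, !comp_id_l. apply delta_refl.
Qed.

Lemma NT (C : FPCat) (P : Doctrine C) (E : Elementary P) (Ac : AC P) (Co : FullCoComprehension P)
  (O : C) (alpha : PA P O) (h : ~ stable_initial (co Co alpha)) (s : Hom O (co Co alpha)) :
  comp (ceil Co alpha) s = idm O ->
  forall psi : PA P O, le psi (sigL Ac h (graph E (ceil Co alpha))).
Proof.
  intros Hs psi.
  pose proof (@N1fwd _ _ E Ac _ _ (ceil Co alpha) h _ (le_refl _)) as H1.
  eapply le_trans; [apply (delta_refl E psi s)|].
  replace (pair s s) with (comp (pair (idm _) (idm _)) s) by (rewrite pair_comp, !comp_id_l; reflexivity).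
  rewrite <- (pb_id (sigL Ac h (graph E (ceil Co alpha)))), <- Hs, !pb_comp.
  apply pb_mono. apply H1.
Qed.

Lemma graph_pair (C : FPCat) (P : Doctrine C) (E : Elementary P) (Z O A : C)
  (c : Hom O A) (f : Hom Z O) (g : Hom Z A) :
  pb (pair f g) (graph E c) = pb (pair (comp c f) g) (delta E A).
Proof.
  unfold graph, prodm. rewrite <- pb_comp, pair_comp, <- !comp_assoc, pair_p1, pair_p2, comp_id_l.
  reflexivity.
Qed.

Definition Nn (C : FPCat) (P : Doctrine C) (Ea : Eaco P) (A : C) (y : PA P A) : PA P A :=
  match excluded_middle_informative (stable_initial (co (ea_co Ea) y)) with
  | left _ => bot (ea_co Ea) A
  | right h => sigL (ea_ac Ea) h (graph (ea_el Ea) (ceil (ea_co Ea) y))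
  end.

Lemma KF (C : FPCat) (P : Doctrine C) (Ea : Eaco P) (A : C) (x y : PA P A) :
  le (meet (el_prim (ea_el Ea)) x (Nn Ea y)) (bot (ea_co Ea) A) -> le x y.
Proof.
  set (E := ea_el Ea). set (Co := ea_co Ea). set (Ac := ea_ac Ea).
  unfold Nn. fold Co. destruct (excluded_middle_informative (stable_initial (co Co y))) as [Hs|h].
  - intros _. apply (init_le (Co:=Co)). exact (map_stable_initial (idm _) Hs).
  - intro H. apply (ceil_le (Co:=Co)).
    set (c := ceil Co y).
    assert (HT : forall psi, le psi (pb c (sigL Ac h (graph E c)))).
    { assert (Hb : pb (idm _) (pb c y) = bot Co _) by (rewrite pb_id; apply ceil_bot).
      destruct (@ceil_univ _ _ Co _ (pb c y) _ (idm _) Hb) as [s [Hs _]].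
      destruct (excluded_middle_informative (stable_initial (co Co (pb c y)))) as [Hs2|h2].
      - intro psi. exact (triv Co s Hs2 _ _).
      - pose proof (@ea_cond _ _ Ea _ _ c y h h2) as Heq.
        fold E Co Ac c in Heq. rewrite <- !sigL_eps in Heq.
        intro psi. rewrite Heq. exact (NT E Ac h2 Hs psi). }
    eapply le_trans; [|apply (ceil_ge Co (bot_least Co y))].
    fold c. eapply le_trans; [|apply pb_mono; exact H].
    rewrite pb_meet. apply meet_glb; [apply le_refl|apply HT].
Qed.

Lemma KB (C : FPCat) (P : Doctrine C) (Ea : Eaco P) (A : C) (y : PA P A) :
  le (meet (el_prim (ea_el Ea)) y (Nn Ea y)) (bot (ea_co Ea) A).
Proof.
  set (E := ea_el Ea). set (Co := ea_co Ea). set (Ac := ea_ac Ea).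
  unfold Nn. fold Co. destruct (excluded_middle_informative (stable_initial (co Co y))) as [Hs|h].
  - apply meet_r.
  - set (c := ceil Co y). set (O := co Co y). fold E Ac.
    set (G := graph E c). set (eps := epsL Ac h G).
    set (S := sigL Ac h G).
    assert (HS : S = pb (pair (comp c eps) (idm A)) (delta E A)).
    { unfold S. rewrite sigL_eps. unfold G. rewrite graph_pair. reflexivity. }
    assert (Step1 : le (meet (el_prim E) y S) (pb eps (bot Co O))).
    { pose proof (leibniz1 E y (idm A) (comp c eps)) as HL.
      rewrite pb_id, pb_comp in HL. unfold c in HL. rewrite ceil_bot in HL.
      eapply le_trans; [|exact HL]. apply meet_glb; [apply meet_l|].
      eapply le_trans; [apply meet_r|]. rewrite HS. apply delta_sym. }
    assert (Q : le (pb eps (bot Co O)) (bot Co A) \/ le S (bot Co A)).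
    { assert (Hb : pb (idm O) (bot Co O) = bot Co O) by apply pb_id.
      destruct (@ceil_univ _ _ Co _ (bot Co O) _ (idm _) Hb) as [s0 [Hs0 _]].
      destruct (excluded_middle_informative (stable_initial (co Co (bot Co O)))) as [Hs1|h1].
      - right. unfold S, G. apply N1bwd. intro chi. exact (triv Co s0 Hs1 _ _).
      - destruct (excluded_middle_informative (stable_initial (co Co (pb eps (bot Co O))))) as [Hs2|h2].
        + right.
          pose proof (init_le (map_stable_initial (idm _) Hs2)) as Hall.
          pose proof (leibniz1 E (bot Co A) (comp c eps) (idm A)) as HL.
          rewrite pb_id in HL. eapply le_trans; [|exact HL].
          apply meet_glb; [|rewrite HS; apply le_refl].
          eapply le_trans; [apply Hall|]. rewrite pb_comp. apply pb_mono.
          apply bot_least.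
        + left.
          pose proof (@ea_cond _ _ Ea _ _ eps (bot Co O) h1 h2) as Heq.
          fold E Co Ac in Heq. rewrite <- !sigL_eps in Heq.
          set (b := pb eps (bot Co O)) in *.
          set (k := ceil Co b) in *.
          assert (Hall : forall psi : PA P A,
                     le psi (pb (pair (comp k (epsL Ac h2 (graph E k))) (idm A)) (delta E A))).
          { intro psi. rewrite <- graph_pair, <- sigL_eps, <- Heq.
            eapply le_trans; [apply (delta_refl E psi eps)|].
            replace (pair eps eps) with (comp (pair (idm O) (idm O)) eps)
              by (rewrite pair_comp, !comp_id_l; reflexivity).
            rewrite pb_comp. apply pb_mono. apply (NT E Ac h1 Hs0). }
          pose proof (delta_ext Hall) as Hext.
          set (e := comp k (epsL Ac h2 (graph E k))) in *.
          eapply le_trans; [apply (proj1 (Hext b))|].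
          eapply le_trans; [|apply (proj2 (Hext (bot Co A)))].
          unfold e. rewrite !pb_comp. apply pb_mono. unfold k. rewrite ceil_bot.
          apply bot_least. }
    destruct Q as [Q|Q].
    + eapply le_trans; [exact Step1|exact Q].
    + eapply le_trans; [apply meet_r|exact Q].
Qed.

Lemma Kiff (C : FPCat) (P : Doctrine C) (Ea : Eaco P) (A : C) (x y : PA P A) :
  le (meet (el_prim (ea_el Ea)) x (Nn Ea y)) (bot (ea_co Ea) A) <-> le x y.
Proof.
  split; [apply KF|]. intro H. eapply le_trans; [|apply (KB Ea y)].
  apply meet_glb; [eapply le_trans; [apply meet_l|exact H]|apply meet_r].
Qed.

Theorem mainTheorem15 (C : FPCat) (P : Doctrine C) (H : Heaco P) :
  forall A : C,
    is_heyting_algebra (fun x y : PA P A => le y x) /\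
    has_finite_joins (fun x y : PA P A => le x y).
Proof.
  intro A.
  set (Ea := he_eaco H).
  set (E := ea_el Ea). set (Co := ea_co Ea).
  set (m := meet (el_prim E) (A:=A)).
  set (N := Nn Ea (A:=A)).
  set (z0 := bot Co A).
  assert (K : forall x y, le (m x (N y)) z0 <-> le x y) by (intros; apply Kiff).
  assert (swap : forall x y, le (m x y) (m y x))
    by (intros; apply meet_glb; [apply meet_r|apply meet_l]).
  assert (Ka : forall y, le (m y (N y)) z0) by (intro; apply K, le_refl).
  assert (Kb : forall x y, le (m x y) z0 -> le x (N y)).
  { intros x y Hxy. apply K.
    assert (Hu : le (m x (N (N y))) y).
    { apply K. eapply le_trans; [|apply (Ka (N y))].
      eapply le_trans; [|apply swap]. apply meet_glb; [|apply meet_r].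
      eapply le_trans; [apply meet_l|apply meet_r]. }
    eapply le_trans; [|exact Hxy]. apply meet_glb; [apply meet_l|exact Hu]. }
  assert (Kc : forall x y, le x (N y) -> le (m x y) z0).
  { intros x y Hx. eapply le_trans; [|apply (Ka y)].
    eapply le_trans; [apply swap|]. apply meet_glb; [apply meet_l|].
    eapply le_trans; [apply meet_r|exact Hx]. }
  assert (NN : forall z, le (N (N z)) z).
  { intro z. apply K. eapply le_trans; [apply swap|apply Ka]. }
  assert (anti : forall x y, le x y -> le (N y) (N x)).
  { intros x y Hxy. apply Kb. eapply le_trans; [|apply (Ka y)].
    apply meet_glb; [eapply le_trans; [apply meet_r|exact Hxy]|apply meet_l]. }
  set (j := fun x y => N (m (N x) (N y))).
  assert (Hj : forall x y z, le (j x y) z <-> le x z /\ le y z).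
  { intros x y z; split.
    - intro Hjz. split; eapply le_trans; try exact Hjz; apply Kb.
      + eapply le_trans; [|apply (Ka x)]. apply meet_glb; [apply meet_l|].
        eapply le_trans; [apply meet_r|apply meet_l].
      + eapply le_trans; [|apply (Ka y)]. apply meet_glb; [apply meet_l|].
        eapply le_trans; [apply meet_r|apply meet_r].
    - intros [Hx Hy]. eapply le_trans; [|apply NN]. apply anti.
      apply meet_glb; apply anti; assumption. }
  split.
  - exists z0, (pb (pair (idm A) (idm A)) (delta E A)), j, m, (fun x y => m y (N x)).
    split; [intro; apply bot_least|].
    split; [intro; apply delta_refl|].
    split; [intros; apply Hj|].
    split.
    + intros x y z; split.
      * intro Hz; split; (eapply le_trans; [exact Hz|]); [apply meet_l|apply meet_r].
      * intros [H1 H2]; apply meet_glb; assumption.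
    + intros x y z. simpl. split.
      * intro Hy. apply K. apply Kc in Hy.
        eapply le_trans; [|exact Hy]. apply meet_glb.
        -- eapply le_trans; apply meet_l.
        -- apply meet_glb; [apply meet_r|]. eapply le_trans; [apply meet_l|apply meet_r].
      * intro Hy. apply Kb. apply K in Hy.
        eapply le_trans; [|exact Hy]. apply meet_glb; [apply meet_glb|].
        -- apply meet_l.
        -- eapply le_trans; [apply meet_r|apply meet_r].
        -- eapply le_trans; [apply meet_r|apply meet_l].
  - split.
    + exists z0. intro; apply bot_least.
    + intros x y. exists (j x y). apply Hj.
Qed.
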